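(* Let $q,N\in\mathbb{N}$ with $q,N\ge1$ and $p\in(0,1)$. Choose $L\in\mathbb{N}$ and $\varepsilon>0$ with $$L\ge\frac{2nD(q+A+C+2)^n}{(1-p)C^n}\quad\text{and}\quad\varepsilon\le\frac1{2NL}.$$ If $s$ is chosen uniformly at random from $S=\frac1{NL}\{0,\dots,L-1\}^n$, then $\Pr\big(G(s)\cap H_{\mathrm{grid}}(\varepsilon)=\emptyset\big)\ge p$, where $G(s)=\{s+\frac1Nv:v\in\{0,\dots,qN-1\}^n\}$.
   Context: An $n$-dimensional infrastructure consists of a full-rank lattice $\Lambda\subset\mathbb{R}^n$, a finite non-empty set $X$, an injective map $d:X\to\mathbb{R}^n/\Lambda$, and a set $\mathrm{fRep}\subseteq X\times\mathbb{R}^n$ with $X\times\{0\}\subseteq\mathrm{fRep}$ such that $\Phi:\mathrm{fRep}\to\mathbb{R}^n/\Lambda$, $(x,t)\mapsto d(x)+t$, is a bijection. Let $\pi:\mathbb{R}^n\to\mathbb{R}^n/\Lambda$ be the projection, $\hat X=\pi^{-1}(d(X))$, and for $\hat x\in\hat X$ let $\hat V_{\hat x}=\{\hat x+t:(d^{-1}(\pi(\hat x)),t)\in\mathrm{fRep}\}$; these sets partition $\mathbb{R}^n$. Standing assumptions: the infrastructure is cornered (for each $\hat x$, $\hat x\in\hat V_{\hat x}$ and $\{r:\hat x\le r\le t\}\subseteq\hat V_{\hat x}$ for all $t\in\hat V_{\hat x}$, componentwise order); (A1) there is $A>0$ with $\hat V_{\hat x}\subseteq\hat x+[0,A]^n$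 for all $\hat x$; (A2) there are $C,D>0$ such that $(r+[0,C]^n)\cap\hat X$ has at most $D$ elements for every $r\in\mathbb{R}^n$. $\mathbb{N}=\{0,1,2,\dots\}$, and $$H_{\mathrm{grid}}(\varepsilon)=\bigcup_{\hat x\in\hat X}\Big(\big(\tfrac1N\mathbb{N}^n+\partial\hat V_{\hat x}\big)\cap\overline{\hat V_{\hat x}}\Big)+[-\varepsilon,\varepsilon]^n,$$ with $\partial$ the topological boundary and $\overline{\,\cdot\,}$ the closure. *)

(* Defs.v *)
From HB Require Import structures.
From mathcomp Require Import all_boot all_order all_algebra.
From mathcomp Require Import all_classical all_reals all_analysis.
Set Implicit Arguments. Unset Strict Implicit. Unset Printing Implicit Defensive.
Import Order.TTheory GRing.Theory Num.Theory.
Import numFieldNormedType.Exports.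
Local Open Scope classical_set_scope.
Local Open Scope ring_scope.

(* R^n is modelled as row vectors 'rV[R]_n over a realType R, with the
   (product = Euclidean) topology of MathComp-Analysis. *)

Section Infrastructure.
Context {R : realType} {n : nat}.

Definition lattice (B : 'M[R]_n) : set 'rV[R]_n :=
  [set map_mx (fun k : int => k%:~R) z *m B | z in [set: 'rV[int]_n]].

Definition congr_mod (B : 'M[R]_n) (x y : 'rV[R]_n) : Prop := lattice B (x - y).

(* Elements of R^n/Lambda are represented by representatives in R^n;
   d x is a representative of the class d(x). *)
Definition is_infrastructure (B : 'M[R]_n) (X : finType) (d : X -> 'rV[R]_n)
    (fRep : set (X * 'rV[R]_n)) : Prop :=
  [/\ B \in unitmx /\ (0 < #|X|)%N,
      (forall x y, congr_mod B (d x) (d y) -> x = y),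
      (forall x, fRep (x, 0)),
      (forall r, exists xt, fRep xt /\ congr_mod B (d xt.1 + xt.2) r)
    & (forall xt yt, fRep xt -> fRep yt ->
         congr_mod B (d xt.1 + xt.2) (d yt.1 + yt.2) -> xt = yt)].

Definition Xhat (B : 'M[R]_n) (X : finType) (d : X -> 'rV[R]_n) : set 'rV[R]_n :=
  [set y | exists x : X, congr_mod B y (d x)].

Definition Vhat (B : 'M[R]_n) (X : finType) (d : X -> 'rV[R]_n)
    (fRep : set (X * 'rV[R]_n)) (xh : 'rV[R]_n) : set 'rV[R]_n :=
  [set xh + t | t in [set t | exists x : X, congr_mod B xh (d x) /\ fRep (x, t)]].

Definition leV (a b : 'rV[R]_n) : Prop := forall i, a 0 i <= b 0 i.

Definition box (c : R) : set 'rV[R]_n := [set v | forall i, 0 <= v 0 i <= c].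

Definition cornered (B : 'M[R]_n) (X : finType) (d : X -> 'rV[R]_n) (fRep : set (X * 'rV[R]_n)) : Prop :=
  forall xh, Xhat B d xh ->
    Vhat B d fRep xh xh /\
    (forall t, Vhat B d fRep xh t ->
       forall r, leV xh r -> leV r t -> Vhat B d fRep xh r).

Definition assumptionA1 (B : 'M[R]_n) (X : finType) (d : X -> 'rV[R]_n) (fRep : set (X * 'rV[R]_n)) (A : R) : Prop :=
  0 < A /\ forall xh, Xhat B d xh ->
    Vhat B d fRep xh `<=` [set xh + v | v in box A].

Definition assumptionA2 (B : 'M[R]_n) (X : finType) (d : X -> 'rV[R]_n) (C D : R) : Prop :=
  [/\ 0 < C, 0 < D &
    forall (r : 'rV[R]_n) (s : seq 'rV[R]_n), uniq s ->
      (forall y, y \in s -> [set r + v | v in box C] y /\ Xhat B d y) ->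
      (size s)%:R <= D].

Definition boundary (S : set 'rV[R]_n) : set 'rV[R]_n := closure S `\` interior S.

Definition gridN (N : nat) : set 'rV[R]_n :=
  [set \row_i ((k i)%:R / N%:R) | k in [set: 'I_n -> nat]].

Definition Hgrid (B : 'M[R]_n) (X : finType) (d : X -> 'rV[R]_n)
    (fRep : set (X * 'rV[R]_n)) (N : nat) (eps : R) : set 'rV[R]_n :=
  [set y | exists h e,
     y = h + e /\
     (exists xh, Xhat B d xh /\
        (exists g b, gridN N g /\ boundary (Vhat B d fRep xh) b /\ h = g + b) /\
        closure (Vhat B d fRep xh) h) /\
     (forall i, - eps <= e 0 i <= eps)].

End Infrastructure.

(* Main.v *)
Require Import Defs.
From HB Require Import structures.
From mathcomp Require Import all_boot all_order all_algebra.
From mathcomp Require Import all_classical all_reals all_analysis.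
From mathcomp Require Import zify ring lra.
Import Order.TTheory GRing.Theory Num.Theory.
Import numFieldNormedType.Exports.
Local Open Scope classical_set_scope.
Local Open Scope ring_scope.
Set Implicit Arguments. Unset Strict Implicit.

Section Geo.
Variables (R : realType) (n : nat).
Implicit Types (B : 'M[R]_n).

Lemma lattice0 B : lattice B 0.
Proof. by exists 0 => //; rewrite map_mx0 mul0mx. Qed.

Lemma latticeN B x : lattice B x -> lattice B (- x).
Proof.
case=> z _ <-; exists (- z) => //.
by rewrite (map_mxN (intr : int -> R)) mulNmx.
Qed.

Lemma latticeD B x y : lattice B x -> lattice B y -> lattice B (x + y).
Proof.
case=> z _ <-; case=> w _ <-; exists (z + w) => //.
by rewrite (map_mxD (intr : int -> R)) mulmxDl.
Qed.

Lemma cell_cover B (X : finType) (d : X -> 'rV[R]_n) fRep :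
  is_infrastructure B d fRep ->
  forall z, exists xh, Xhat B d xh /\ Vhat B d fRep xh z.
Proof.
case=> _ _ _ Honto _ z.
have [[x t] [Hf Hc]] := Honto z.
exists (z - t); split.
  exists x; rewrite /congr_mod.
  have -> : z - t - d x = - (d x + t - z) by apply/rowP => i; rewrite !mxE; ring.
  exact: latticeN.
exists t => //; last by rewrite subrK.
exists x; split => //.
rewrite /congr_mod.
have -> : z - t - d x = - (d x + t - z) by apply/rowP => i; rewrite !mxE; ring.
exact: latticeN.
Qed.

Lemma cell_disj B (X : finType) (d : X -> 'rV[R]_n) fRep :
  is_infrastructure B d fRep ->
  forall xh wh z, Vhat B d fRep xh z -> Vhat B d fRep wh z -> xh = wh.
Proof.
case=> _ _ _ _ Hinj xh wh z [t [x [c1 f1]] <-] [t' [x' [c2 f2]] e].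
have := Hinj (x, t) (x', t') f1 f2.
have L : congr_mod B (d (x, t).1 + (x, t).2) (d (x', t').1 + (x', t').2).
  rewrite /congr_mod /=.
  have -> : d x + t - (d x' + t') = - (xh - d x) + (wh - d x').
    rewrite (_ : wh = xh + t - t'); last by rewrite -e addrK.
    apply/rowP => i; rewrite !mxE; ring.
  exact: latticeD (latticeN c1) c2.
move=> /(_ L) [_ et]; subst t'.
by move/(congr1 (fun u => u - t)): e; rewrite !addrK.
Qed.

End Geo.
Section Topo.
Variables (R : realType) (n : nat).

Lemma ball_coord (x y : 'rV[R]_n) (e : R) : ball x e y -> forall i, `|x 0 i - y 0 i| < e.
Proof. move=> [e0 H] i. exact: (H 0 i). Qed.

Lemma box_closure (S : set 'rV[R]_n) (a b : 'I_n -> R) :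
  S `<=` [set z | forall i, a i <= z 0 i <= b i] ->
  closure S `<=` [set z | forall i, a i <= z 0 i <= b i].
Proof.
move=> HS z Hz i; apply/andP; split; rewrite leNgt; apply/negP => Hlt.
- have e0 : 0 < a i - z 0 i by rewrite subr_gt0.
  have [w [Sw Bw]] := Hz _ (nbhsx_ballx z _ e0).
  have := ball_coord Bw i; have := HS w Sw i.
  rewrite ltr_norml => /andP[h1 h2] /andP[h3 h4]; lra.
- have e0 : 0 < z 0 i - b i by rewrite subr_gt0.
  have [w [Sw Bw]] := Hz _ (nbhsx_ballx z _ e0).
  have := ball_coord Bw i; have := HS w Sw i.
  rewrite ltr_norml => /andP[h1 h2] /andP[h3 h4]; lra.
Qed.

Lemma box_interior (S : set 'rV[R]_n) (a b : 'I_n -> R) (x : 'rV[R]_n) :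
  (forall z : 'rV[R]_n, (forall i, a i < z 0 i < b i) -> S z) ->
  (forall i, a i < x 0 i < b i) -> interior S x.
Proof.
move=> HS Hx; rewrite /interior.
apply: (filterS HS).
have := @filter_forall _ 'I_n (fun i (z : 'rV[R]_n) => a i < z 0 i < b i) (nbhs x) _.
apply => i.
have /andP[h1 h2] := Hx i.
apply/nbhs_ballP; exists (Order.min (x 0 i - a i) (b i - x 0 i)).
  by rewrite /= lt_min !subr_gt0 h1 h2.

move=> z /ball_coord /(_ i); rewrite lt_min !ltr_norml; case/andP => /andP[h3 h4] /andP[h5 h6].
apply/andP; split; lra.
Qed.

End Topo.
Section Key.
Variables (R : realType) (n : nat).
Variables (B : 'M[R]_n) (X : finType) (d : X -> 'rV[R]_n) (fRep : set (X * 'rV[R]_n)).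
Hypothesis inf : is_infrastructure B d fRep.
Hypothesis corn : cornered B d fRep.
Variable A : R.
Hypothesis A1 : assumptionA1 B d fRep A.

Lemma cell_bounds xh z : Xhat B d xh -> Vhat B d fRep xh z ->
  forall i, xh 0 i <= z 0 i <= xh 0 i + A.
Proof.
move=> Xx Vz i; have [_ H] := A1; have [v bv <-] := H xh Xx z Vz.
by rewrite mxE; have /andP[h1 h2] := bv i; apply/andP; split; lra.
Qed.

Lemma cell_cl_bounds xh z : Xhat B d xh -> closure (Vhat B d fRep xh) z ->
  forall i, xh 0 i <= z 0 i <= xh 0 i + A.
Proof.
move=> Xx; apply: (@box_closure R n _ (fun i => xh 0 i) (fun i => xh 0 i + A)).
by move=> w; apply: cell_bounds.
Qed.

Lemma geo_key (N : nat) xh b g h (dl : R) :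
  Xhat B d xh -> boundary (Vhat B d fRep xh) b -> gridN N g -> h = g + b ->
  closure (Vhat B d fRep xh) h -> 0 < dl ->
  exists wh, Xhat B d wh /\ (forall j, h 0 j - A <= wh 0 j <= h 0 j + dl) /\
    exists i, exists m : int, `|h 0 i - wh 0 i - m%:~R / N%:R| <= dl.
Proof.
move=> Xx [clb nint] [k _ gk] eh Hcl dl0.
set z := h + const_mx dl.
have zE j : z 0 j = h 0 j + dl by rewrite !mxE.
have [wh [Xw Vz]] := cell_cover inf z.
have bw := cell_bounds Xw Vz.
exists wh; split; first done; split.
  move=> j; have := bw j; rewrite zE => /andP[h1 h2]; apply/andP; split; lra.
case: (boolP [exists i, h 0 i <= wh 0 i]).
  case/existsP => i hi; exists i, 0; rewrite mul0r subr0.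
  have := bw i; rewrite zE => /andP[h1 h2]; rewrite ler_norml; apply/andP; split; lra.
rewrite negb_exists => /forallP Hlt.
have intW : interior (Vhat B d fRep wh) h.
  apply: (@box_interior R n _ (fun i => wh 0 i) (fun i => z 0 i)).
    move=> z' Hz'; apply: ((corn Xw).2 z Vz).
      by move=> i; have /andP[h1 _] := Hz' i; apply: ltW.
    by move=> i; have /andP[_ h1] := Hz' i; apply: ltW.
  by move=> i; rewrite zE ltrDl dl0 andbT ltNge; exact: Hlt i.
have [w [V1 V2]] := Hcl _ intW.
have exw := cell_disj inf V1 V2; subst wh.
have bb := cell_cl_bounds Xx clb.
have gE j : g 0 j = (k j)%:R / N%:R by rewrite -gk mxE.
have hE j : h 0 j = (k j)%:R / N%:R + b 0 j by rewrite eh mxE gE.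
case: (boolP [exists i, b 0 i <= xh 0 i]).
  case/existsP => i hi; exists i, (k i)%:Z.
  have /andP[h1 _] := bb i.
  rewrite hE; have -> : b 0 i = xh 0 i by apply/eqP; rewrite eq_le hi h1.
  rewrite -pmulrn (_ : _ - _ = 0); first by rewrite normr0 ltW.
  by lra.
rewrite negb_exists => /forallP Hlt2.
exfalso; apply: nint.
apply: (@box_interior R n _ (fun i => xh 0 i) (fun i => z 0 i)).
  move=> z' Hz'; apply: ((corn Xx).2 z Vz).
    by move=> i; have /andP[h1 _] := Hz' i; apply: ltW.
  by move=> i; have /andP[_ h1] := Hz' i; apply: ltW.
move=> i; apply/andP; split; first by rewrite ltNge; exact: Hlt2 i.
rewrite zE hE.
have : 0 <= (k i)%:R / N%:R :> R by rewrite divr_ge0.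
lra.
Qed.

End Key.
Section Count1.
Variables (R : realType).

Lemma int_small (z : int) : `|z%:~R : R| < 1 -> z = 0.
Proof. rewrite -intr_norm ltrz1 => h. lia. Qed.

Definition Bd (N L : nat) (c : R) : pred 'I_L :=
  [pred kk : 'I_L | `[< exists m : int,
      `|(kk : nat)%:R / (N * L)%:R + m%:~R / N%:R - c| < 1 / (N * L)%:R >]].
Arguments Bd : clear implicits.

Lemma Bd_int (N L : nat) (c : R) (kk : 'I_L) (m : int) : (0 < N)%N -> (0 < L)%N ->
  `|(kk : nat)%:R / (N * L)%:R + m%:~R / N%:R - c| < 1 / (N * L)%:R ->
  `|((kk : nat)%:Z + m * L%:Z)%:~R - c * (N * L)%:R| < 1.
Proof.
move=> hN hL h.
have NL0 : 0 < (N * L)%:R :> R by rewrite ltr0n muln_gt0 hN hL.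
have N0 : (N%:R : R) != 0 by rewrite pnatr_eq0 -lt0n.
have -> : ((kk : nat)%:Z + m * L%:Z)%:~R - c * (N * L)%:R =
   ((kk : nat)%:R / (N * L)%:R + m%:~R / N%:R - c) * (N * L)%:R.
  rewrite intrD intrM -!pmulrn natrM; field.
  by rewrite N0 /= pnatr_eq0 -lt0n hL.
rewrite normrM (ger0_norm (ltW NL0)).
by rewrite -ltr_pdivlMr // mul1r -[X in _ < X]mul1r.
Qed.

Lemma card_Bd (N L : nat) (c : R) : (0 < N)%N -> (0 < L)%N -> (#|Bd N L c| <= 2)%N.
Proof.
move=> hN hL.
case: (leqP L 1) => hL1.
  by apply: leq_trans (max_card _) _; rewrite card_ord; apply: leq_trans hL1 _.
set c' := c * (N * L)%:R.
pose a (kk : 'I_L) (m : int) : int := (kk : nat)%:Z + m * L%:Z.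
pose f (kk : 'I_L) : bool := `[< exists m : int,
   `|(a kk m)%:~R - c'| < 1 /\ (a kk m)%:~R <= c' >].
have key (a1 a2 : int) : `|a1%:~R - c'| < 1 -> `|a2%:~R - c'| < 1 ->
    (a1%:~R <= c') = (a2%:~R <= c') -> a1 = a2.
  move=> h1 h2 e; apply/eqP; rewrite -subr_eq0; apply/eqP; apply: int_small.
  rewrite intrB; move: h1 h2; rewrite !ltr_norml => /andP[h1 h1'] /andP[h2 h2'].
  case: (lerP (a1%:~R) c') e => ha1; case: (lerP (a2%:~R) c') => ha2 // _;
    apply/andP; split; lra.
have uniqm kk m m' : `|(a kk m)%:~R - c'| < 1 -> `|(a kk m')%:~R - c'| < 1 -> m = m'.
  move=> h1 h2.
  have h3 : `|((m - m') * L%:Z)%:~R : R| < 2.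
    have -> : ((m - m') * L%:Z)%:~R = (a kk m)%:~R - (a kk m')%:~R :> R.
      by rewrite /a !intrD !intrM !intrB; ring.
    move: h1 h2; rewrite !ltr_norml => /andP[h1 h1'] /andP[h2 h2'].
    apply/andP; split; lra.
  move: h3; rewrite -intr_norm (_ : 2 = (2%:Z)%:~R :> R) // ltr_int => h3.
  have hL2 : (2 <= L%:Z)%R by rewrite lez_nat.
  move: h3; rewrite ltr_norml => /andP[h4 h5].
  have L0 : (0 <= L%:Z)%R by [].
  have [t0|[t1|t2]] : (m - m' = 0)%R \/ (1 <= m - m')%R \/ (m - m' <= -1)%R by lia.
  - by apply/eqP; rewrite -subr_eq0 t0.
  - have := ler_wpM2r L0 t1; rewrite mul1r => ?; lia.
  - have := ler_wpM2r L0 t2; rewrite mulN1r => ?; lia.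
have fE kk m : `|(a kk m)%:~R - c'| < 1 -> f kk = ((a kk m)%:~R <= c').
  move=> h; apply/asboolP/idP.
    by case=> m' [h' h'']; rewrite (uniqm _ _ _ h h').
  by move=> h'; exists m.
have inj : {in Bd N L c &, injective f}.
  move=> k1 k2; rewrite !inE /= => -[m1 hm1] [m2 hm2] ef.
  have g1 := Bd_int hN hL hm1; have g2 := Bd_int hN hL hm2.
  have e12 : a k1 m1 = a k2 m2.
    apply: key; [exact g1|exact g2|].
    by rewrite -(fE _ _ g1) -(fE _ _ g2).
  apply/val_inj => /=; move: e12; rewrite /a => e12.
  have lt1 := ltn_ord k1; have lt2 := ltn_ord k2.
  have L0 : (0 <= L%:Z)%R by [].
  have [t0|[t1|t2]] : (m1 - m2 = 0)%R \/ (1 <= m1 - m2)%R \/ (m1 - m2 <= -1)%R by lia.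
  - have em : m1 = m2 by apply/eqP; rewrite -subr_eq0 t0.
    subst m2; lia.
  - have := ler_wpM2r L0 t1; rewrite mul1r mulrBl => ?; lia.
  - have := ler_wpM2r L0 t2; rewrite mulN1r mulrBl => ?; lia.
rewrite -(card_in_imset inj).
by apply: leq_trans (max_card _) _; rewrite card_bool.
Qed.
End Count1.
Arguments Bd {R} N L c _.
Section Count2.
Lemma card_coord (n L : nat) (i : 'I_n) (P : pred 'I_L) :
  #|[pred k : {ffun 'I_n -> 'I_L} | k i \in P]| = (#|P| * L ^ n.-1)%N.
Proof.
pose F := fun j : 'I_n => if j == i then P else predT.
have -> : #|[pred k : {ffun 'I_n -> 'I_L} | k i \in P]| = #|family F|.
  apply: eq_card => k; rewrite !inE; apply/idP/familyP.
    by move=> h j; rewrite /F; case: eqP => [->|] //.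
  by move=> /(_ i); rewrite /F eqxx.
rewrite card_family.
have -> : foldr muln 1%N [seq #|F x| | x : 'I_n] = (\prod_(x : 'I_n) #|F x|)%N.
  have gen (s : seq 'I_n) : foldr muln 1%N [seq #|F x| | x <- s] = (\prod_(x <- s) #|F x|)%N.
    by elim: s => [|x s ih]; rewrite ?big_nil ?big_cons //= ih.
  by rewrite /image_mem enumT gen.
rewrite (bigD1 i) //= /F eqxx; congr (_ * _)%N.
rewrite (eq_bigr (fun=> L)); last by move=> j /negbTE ->; rewrite card_ord.
by rewrite prod_nat_const cardC1 card_ord.
Qed.
End Count2.
Lemma size_partition (T : eqType) (J : finType) (f : T -> J) (s : seq T) :
  size s = (\sum_(j : J) count (fun x => j == f x) s)%N.
Proof.
under eq_bigr do rewrite -sum1_count.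
rewrite (exchange_big_dep predT) //= -sum1_size.
by apply: eq_bigr => x _; rewrite big_pred1_eq.
Qed.

Section Cells.
Variables (R : realType) (n : nat).
Variables (B : 'M[R]_n) (X : finType) (d : X -> 'rV[R]_n).
Variables (C D : R).
Hypothesis A2 : assumptionA2 B d C D.

Lemma cells_bound (lo len : R) (s : seq 'rV[R]_n) :
  uniq s -> (forall w, w \in s -> Xhat B d w /\ forall j, lo <= w 0 j <= lo + len) ->
  (size s)%:R <= D * ((Num.truncn (len / C)).+1)%:R ^+ n.
Proof.
case: A2 => C0 D0 HA us Hs.
set t := Num.truncn (len / C).
pose idx (w : 'rV[R]_n) : {ffun 'I_n -> 'I_t.+1} :=
  [ffun j => inord (Num.truncn ((w 0 j - lo) / C))].
rewrite (size_partition idx s) natr_sum.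
apply: (@le_trans _ _ (\sum_(J : {ffun 'I_n -> 'I_t.+1}) D)).
  apply: ler_sum => J _.
  rewrite -size_filter.
  apply: (HA (\row_j (lo + C * ((J j : nat)%:R)))).
    exact: filter_uniq.
  move=> y; rewrite mem_filter => /andP[/eqP eJ ys].
  have [Xy Ry] := Hs y ys; split => //.
  exists (y - \row_j (lo + C * ((J j : nat)%:R))); last by rewrite addrC subrK.
  move=> j; rewrite !mxE eJ ffunE.
  have /andP[r1 r2] := Ry j.
  set u := (y 0 j - lo) / C.
  have u0 : 0 <= u by rewrite divr_ge0 // ?subr_ge0 // ltW.
  have ule : u <= len / C by rewrite ler_pM2r ?invr_gt0 // lerBlDl.
  have tle : (Num.truncn u <= t)%N by apply: le_truncn.
  rewrite inordK ?ltnS //.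
  have /andP[i1 i2] := truncn_itv u0.
  have yE : y 0 j - lo = u * C by rewrite /u mulrVK ?unitfE ?gt_eqF.
  set T := (Num.truncn u)%:R in i1 i2 *.
  rewrite -natr1 in i2.
  apply/andP; split; nra.
by rewrite sumr_const card_ffun !card_ord -[X in X <= _]mulr_natr natrX.
Qed.

End Cells.
Section Enum.
Variables (R : realType) (n : nat).
Variables (B : 'M[R]_n) (X : finType) (d : X -> 'rV[R]_n).
Variables (C D : R).
Hypothesis A2 : assumptionA2 B d C D.

Lemma cells_enum (lo len : R) :
  exists s : seq 'rV[R]_n,
    (forall w, Xhat B d w -> (forall j, lo <= w 0 j <= lo + len) -> w \in s) /\
    (size s)%:R <= D * ((Num.truncn (len / C)).+1)%:R ^+ n.
Proof.
set M := D * _.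
pose good (s : seq 'rV[R]_n) := uniq s /\
   (forall w, w \in s -> Xhat B d w /\ forall j, lo <= w 0 j <= lo + len).
pose P (k : nat) : bool := `[< exists s, good s /\ size s = k >].
have exP : exists i, P i by exists 0%N; apply/asboolP; exists [::]; split.
have M0 : 0 <= M.
  by case: A2 => _ D0 _; rewrite mulr_ge0 ?ltW // exprn_ge0.
have ubP : forall i, P i -> (i <= Num.truncn M)%N.
  move=> i /asboolP [s [[us Hs] <-]].
  by rewrite truncn_ge_nat //; apply: (cells_bound A2 us Hs).
case: (ex_maxnP exP ubP) => k /asboolP [s [[us Hs] sk]] kmax.
exists s; split; last by rewrite sk -sk; exact: (cells_bound A2 us Hs).
move=> w Xw Rw; apply/negPn/negP => ws.
have : P (size (w :: s)).
  apply/asboolP; exists (w :: s); split => //; split.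
    by rewrite /= ws us.
  by move=> z; rewrite inE => /orP[/eqP ->|/Hs].
by move/kmax; rewrite /= sk ltnn.
Qed.
End Enum.
Section Witness.
Variables (R : realType) (n : nat).
Variables (B : 'M[R]_n) (X : finType) (d : X -> 'rV[R]_n) (fRep : set (X * 'rV[R]_n)).
Hypothesis inf : is_infrastructure B d fRep.
Hypothesis corn : cornered B d fRep.
Variable A : R.
Hypothesis A1 : assumptionA1 B d fRep A.

Lemma bad_witness (q N L : nat) (eps : R) (s : seq 'rV[R]_n)
  (k : {ffun 'I_n -> 'I_L}) (v : 'I_n -> 'I_(q * N)) :
  (0 < N)%N -> (0 < L)%N -> 0 < eps -> eps <= 1 / (2 * N%:R * L%:R) ->
  (forall w, Xhat B d w -> (forall j, - A - 1 <= w 0 j <= - A - 1 + (q%:R + A + 2)) -> w \in s) ->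
  Hgrid B d fRep N eps (\row_i ((k i)%:R / (N * L)%:R + (v i)%:R / N%:R)) ->
  exists2 w, w \in s & exists i, k i \in Bd N L (w 0 i).
Proof.
move=> hN hL eps0 heps cover.
set y := \row_i _.
case=> h [e [ey [[xh [Xx [[g [b [gg [bb hgb]]]] clh]]] He]]].
have N0 : 0 < N%:R :> R by rewrite ltr0n.
have L0 : 0 < L%:R :> R by rewrite ltr0n.
set u : R := 1 / (N * L)%:R.
have uE : u * (N%:R * L%:R) = 1 by rewrite /u natrM; field; rewrite !gt_eqF.
have u0 : 0 < u by rewrite /u divr_gt0 // natrM mulr_gt0.
have heps' : eps <= u / 2.
  have e2 : 1 / (2 * N%:R * L%:R) = u / 2 :> R.
    by rewrite /u natrM; field; rewrite !gt_eqF.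
  by rewrite -e2.
have NL1 : 1 <= N%:R * L%:R :> R by rewrite -natrM ler1n muln_gt0 hN hL.
have u1 : u <= 1.
  have : u * 1 <= u * (N%:R * L%:R) by rewrite ler_wpM2l // ltW.
  by rewrite uE mulr1.
have dl0 : 0 < u / 4 by rewrite divr_gt0.
have [wh [Xw [Rw [i [m Hm]]]]] := geo_key inf corn A1 Xx bb gg hgb clh dl0.
have hE j : h 0 j = y 0 j - e 0 j by rewrite ey mxE addrK.
have yrange j : 0 <= y 0 j <= q%:R.
  have yE : y 0 j = ((k j : nat) + (v j : nat) * L)%:R * u.
    rewrite /y mxE /u natrD natrM natrM; field; rewrite !gt_eqF //.
  rewrite yE; apply/andP; split; first by rewrite mulr_ge0 // ltW.
  have : (((k j : nat) + (v j : nat) * L)%:R <= (q * (N * L))%:R :> R).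
    rewrite ler_nat.
    have := ltn_ord (k j); have := ltn_ord (v j); nia.
  move=> hle; apply: (le_trans (ler_wpM2r (ltW u0) hle)).
  by rewrite !natrM -mulrA (mulrC _ u) uE mulr1.
exists wh.
  apply: (cover _ Xw) => j.
  have /andP[r1 r2] := Rw j; have /andP[y1 y2] := yrange j.
  have := He j; rewrite hE in r1 r2 => /andP[e1 e2].
  apply/andP; split; lra.
exists i; apply/asboolP; exists ((v i : nat)%:Z - m).
have -> : (k i : nat)%:R / (N * L)%:R + ((v i : nat)%:Z - m)%:~R / N%:R - wh 0 i =
          (h 0 i - wh 0 i - m%:~R / N%:R) + e 0 i.
  rewrite hE /y mxE intrB -pmulrn; field; by rewrite (gt_eqF N0) (gt_eqF L0).
apply: (le_lt_trans (ler_normD _ _)).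
have := He i; rewrite -ler_norml => he.
rewrite -/u; lra.
Qed.
End Witness.
Lemma sum_bool_card (T : finType) (P : pred T) : (\sum_(k : T) (P k : nat))%N = #|P|.
Proof. rewrite -sum1_card [RHS]big_mkcond /=. apply: eq_bigr => k _. by rewrite unfold_in; case: (P k). Qed.

Lemma sum_const_seq (T : Type) (s : seq T) (c : nat) : (\sum_(w <- s) c)%N = (size s * c)%N.
Proof. by elim: s => [|x s ih]; rewrite ?big_nil ?big_cons //= ih mulSn. Qed.

Unset Implicit Arguments.
Theorem proposition4p2 (R : realType) (n : nat) (B : 'M[R]_n) (X : finType)
    (d : X -> 'rV[R]_n) (fRep : set (X * 'rV[R]_n)) (A C D : R)
    (q N L : nat) (p eps : R) :
  is_infrastructure B d fRep ->
  cornered B d fRep ->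
  assumptionA1 B d fRep A ->
  assumptionA2 B d C D ->
  (1 <= q)%N -> (1 <= N)%N -> 0 < p < 1 ->
  2 * n%:R * D * (q%:R + A + C + 2) ^+ n / ((1 - p) * C ^+ n) <= L%:R ->
  0 < eps -> eps <= 1 / (2 * N%:R * L%:R) ->
  p <= #|[pred k : {ffun 'I_n -> 'I_L} |
           `[< forall v : 'I_n -> 'I_(q * N),
                 ~ Hgrid B d fRep N eps
                     (\row_i ((k i)%:R / (N * L)%:R + (v i)%:R / N%:R)) >]]|%:R
       / (L ^ n)%:R.
Proof.
move=> inf corn A1 A2 hq hN /andP[p0 p1] hL eps0 heps.
have A0 : 0 < A by case: A1.
have [C0 D0 _] := A2.
have L0 : (0 < L)%N.
  rewrite lt0n; apply/negP => /eqP L0'; move: heps.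
  rewrite L0' mulr0n mulr0 invr0 mulr0; lra.
have [s [cover hs]] := cells_enum A2 (- A - 1) (q%:R + A + 2).
set Good := [pred k : {ffun 'I_n -> 'I_L} | _ ].
pose F (k : {ffun 'I_n -> 'I_L}) :=
  (\sum_(w <- s) \sum_(i : 'I_n) (k i \in Bd N L (w 0%R i) : nat))%N.
have badle : (#|[predC Good]| <= size s * (n * (2 * L ^ n.-1)))%N.
  apply: (@leq_trans (\sum_(k : {ffun 'I_n -> 'I_L}) F k)).
    rewrite -sum1_card [X in (_ <= X)%N](bigID [predC Good]) /=.
    apply: leq_trans (leq_addr _ _); apply: leq_sum => k kb.
    case: (pselect (exists v : 'I_n -> 'I_(q * N), Hgrid B d fRep N eps
                     (\row_i ((k i)%:R / (N * L)%:R + (v i)%:R / N%:R)))).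
      case=> v Hv.
      have [w ws [i hi]] := bad_witness inf corn A1 hN L0 eps0 heps cover Hv.
      by rewrite /F (big_rem w ws) /= (bigD1 i) //= hi -addnA leq_addr.
    move=> nex; exfalso; move: kb; rewrite !inE /= => /negP; apply.
    by apply/asboolP => v Hv; apply: nex; exists v.
  rewrite /F exchange_big /= -sum_const_seq; apply: leq_sum => w _.
  rewrite exchange_big /=.
  apply: (@leq_trans (\sum_(i : 'I_n) (2 * L ^ n.-1))%N); last by rewrite sum_nat_const card_ord.
  apply: leq_sum => i _.
  apply: (@leq_trans (#|Bd N L (w 0%R i)| * L ^ n.-1)%N).
    by rewrite sum_bool_card -(card_coord i); apply: leqnn.
  by rewrite leq_mul2r card_Bd ?orbT.
set bad := #|[predC Good]| in badle *.
have cardT : (#|Good| + bad)%N = (L ^ n)%N by rewrite cardC card_ffun !card_ord.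
have LN0 : 0 < (L ^ n)%:R :> R by rewrite ltr0n expn_gt0 L0.
rewrite ler_pdivlMr //.
have gE : (#|Good|)%:R = (L ^ n)%:R - bad%:R :> R by rewrite -cardT natrD addrK.
rewrite gE.
suff h : bad%:R <= (1 - p) * (L ^ n)%:R :> R by rewrite mulrBl mul1r in h; lra.
have b1 : bad%:R <= (size s)%:R * (n%:R * (2 * (L ^ n.-1)%:R)) :> R.
  by move: badle; rewrite -(ler_nat R) !natrM.
have Lp0 : 0 <= (L ^ n.-1)%:R :> R by rewrite ler0n.
case: (posnP n) => [n0|npos].
  have nR : n%:R = 0 :> R by rewrite n0.
  rewrite nR mul0r mulr0 in b1.
  apply: (le_trans b1); rewrite mulr_ge0 // ?ler0n //; lra.
set t := Num.truncn _ in hs.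
have q0 : 0 <= q%:R :> R by rewrite ler0n.
have qA0 : 0 <= (q%:R + A + 2) / C by apply: divr_ge0; lra.
have tle : t%:R <= (q%:R + A + 2) / C by rewrite truncn_le.
have t1 : (t.+1)%:R <= (q%:R + A + C + 2) / C.
  have -> : (q%:R + A + C + 2) / C = (q%:R + A + 2) / C + 1 by field; rewrite gt_eqF.
  by rewrite -natr1 lerD2r.
have tX : (t.+1)%:R ^+ n <= (q%:R + A + C + 2) ^+ n / C ^+ n.
  by rewrite -expr_div_n; apply: lerXn2r; rewrite ?nnegrE ?ler0n // (le_trans _ t1) ?ler0n.
have SD : (size s)%:R <= D * ((q%:R + A + C + 2) ^+ n / C ^+ n).
  exact: (le_trans hs (ler_wpM2l (ltW D0) tX)).
have b2 := le_trans b1 (ler_wpM2r (mulr_ge0 (ler0n _ _) (mulr_ge0 (ler0n _ 2) Lp0)) SD).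
have Cn0 : 0 < C ^+ n by rewrite exprn_gt0.
have eqZ : D * ((q%:R + A + C + 2) ^+ n / C ^+ n) * (n%:R * (2 * (L ^ n.-1)%:R))
   = (2 * n%:R * D * (q%:R + A + C + 2) ^+ n / ((1 - p) * C ^+ n)) * (1 - p) * (L ^ n.-1)%:R.
  field; rewrite (gt_eqF Cn0) /=; apply/negP => /eqP h; lra.
rewrite eqZ in b2.
have p1' : 0 <= 1 - p by lra.
have b3 := le_trans b2 (ler_wpM2r Lp0 (ler_wpM2r p1' hL)).
have LnE : (L ^ n)%:R = L%:R * (L ^ n.-1)%:R :> R by rewrite -natrM -expnS prednK.
rewrite LnE; apply: (le_trans b3).
by rewrite mulrA (mulrC (1 - p)).
Qed.
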